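(* Let $n\geq 2$ and let $(x_i,y_i)_{i=1}^n$ be labeled examples with $x_i\in\mathbb{R}^d$, $y_i\in\{-1,+1\}$, $\max_i\|x_i\|\leq 1$. Let $X=[x_1,\dots,x_n]$, $\sigma^2\geq\frac{1}{n}\|X\|^2$ (spectral norm), $\lambda>0$, $b\in\{1,\dots,n\}$, and $\beta_b := 1+\frac{(b-1)(n\sigma^2-1)}{n-1}$. Define the primal objective $P(w) := \frac{1}{n}\sum_{i=1}^n\max\{0,1-y_i\langle w,x_i\rangle\}+\frac{\lambda}{2}\|w\|^2$ with minimizer $w^*$, the dual objective $D(\alpha) := -\frac{1}{2\lambda n^2}\alpha^\top Q\alpha + \frac{1}{n}\sum_{i=1}^n\alpha_i$ for $\alpha\in[0,1]^n$, where $Q_{ij} = y_iy_j\langle x_i,x_j\rangle$, and $w(\alpha) := \frac{1}{\lambda n}\sum_{i=1}^n\alpha_iy_ix_i$. Consider mini-batched SDCA: $\alpha^{(0)}=0$, and for $t=0,1,2,\dots$, draw $A_t$ uniformly at random among subsets of $\{1,\dots,n\}$ of cardinality $b$ (independently across iterations), and set $$\alpha^{(t+1)}_i = \alpha^{(t)}_i + \mathrm{clip}_{[-\alpha_i^{(t)},\,1-\alpha_i^{(t)}]}\left(\frac{\lambda n\big(1-y_i\langle w(\alpha^{(t)}),x_i\rangle\big)}{\beta_b}\right)\ \text{ for } i\in A_t,\qquad \alpha^{(t+1)}_j=\alpha^{(t)}_j\ \text{ for } j\notin A_t,$$ where $\mathrm{clip}_I$ denotes projection onto the interval $I$. Let $\epsilon>0$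 and let integers $t_0, T_0, T$ satisfy $$t_0\geq\max\Big\{0,\Big\lceil\frac{n}{b}\log\Big(\frac{2\lambda n}{\beta_b}\Big)\Big\rceil\Big\},\quad T_0\geq t_0+\frac{\beta_b}{b}\Big[\frac{4}{\lambda\epsilon}-\frac{2n}{\beta_b}\Big]_+,\quad T\geq T_0+\max\Big\{\Big\lceil\frac{n}{b}\Big\rceil,\frac{\beta_b}{b}\frac{1}{\lambda\epsilon}\Big\},$$ where $[z]_+=\max\{0,z\}$, and let $\bar\alpha := \frac{1}{T-T_0}\sum_{t=T_0}^{T-1}\alpha^{(t)}$. Then $$\mathbb{E}[P(w(\bar\alpha))] - P(w^* ) \leq \mathbb{E}[P(w(\bar\alpha)) - D(\bar\alpha)] \leq \epsilon.$$
   Context: $\|X\|$ is the spectral norm of $X$; the expectation is over the random mini-batches. *)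

(* Defs.v *)
From HB Require Import structures.
From mathcomp Require Import all_boot all_order all_algebra.
From mathcomp Require Import classical_sets reals exp.
Set Implicit Arguments. Unset Strict Implicit. Unset Printing Implicit Defensive.
Import Order.TTheory GRing.Theory Num.Theory.
Local Open Scope ring_scope.
Local Open Scope classical_set_scope.

Section SDCA.
Variable R : realType.

Definition dotv d (u v : 'rV[R]_d) : R := \sum_(k < d) u 0 k * v 0 k.
Definition normv d (u : 'rV[R]_d) : R := Num.sqrt (dotv u u).

Definition normc p (u : 'cV[R]_p) : R := Num.sqrt (\sum_(k < p) u k 0 ^+ 2).

Definition specnorm p q (A : 'M[R]_(p, q)) : R :=
  sup [set normc (A *m u) | u in [set u : 'cV[R]_q | normc u <= 1]].

Definition Xmat n d (x : 'I_n -> 'rV[R]_d) : 'M[R]_(d, n) :=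
  \matrix_(k < d, i < n) x i 0 k.

Definition Pobj n d (x : 'I_n -> 'rV[R]_d) (y : 'I_n -> R) (lam : R)
  (w : 'rV[R]_d) : R :=
  n%:R^-1 * \sum_(i < n) Num.max 0 (1 - y i * dotv w (x i))
  + lam / 2 * normv w ^+ 2.

Definition Qmat n d (x : 'I_n -> 'rV[R]_d) (y : 'I_n -> R) (i j : 'I_n) : R :=
  y i * y j * dotv (x i) (x j).

Definition Dobj n d (x : 'I_n -> 'rV[R]_d) (y : 'I_n -> R) (lam : R)
  (a : 'I_n -> R) : R :=
  - (2 * lam * n%:R ^+ 2)^-1 * (\sum_(i < n) \sum_(j < n) a i * Qmat x y i j * a j)
  + n%:R^-1 * \sum_(i < n) a i.

Definition wof n d (x : 'I_n -> 'rV[R]_d) (y : 'I_n -> R) (lam : R)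
  (a : 'I_n -> R) : 'rV[R]_d :=
  (lam * n%:R)^-1 *: \sum_(i < n) (a i * y i) *: x i.

Definition clip (lo hi z : R) : R := Num.min hi (Num.max lo z).

Definition beta (n b : nat) (sigma : R) : R :=
  1 + (b%:R - 1) * (n%:R * sigma ^+ 2 - 1) / (n%:R - 1).

Definition sdca_step n d (x : 'I_n -> 'rV[R]_d) (y : 'I_n -> R) (lam bet : R)
  (A : {set 'I_n}) (a : 'I_n -> R) : 'I_n -> R :=
  fun i => if i \in A then
             a i + clip (- a i) (1 - a i)
                     (lam * n%:R * (1 - y i * dotv (wof x y lam a) (x i)) / bet)
           else a i.

Fixpoint alpha_it n d (x : 'I_n -> 'rV[R]_d) (y : 'I_n -> R) (lam bet : R)
  (As : nat -> {set 'I_n}) (t : nat) : 'I_n -> R :=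
  match t with
  | 0 => fun _ => 0
  | t'.+1 => sdca_step x y lam bet (As t') (alpha_it x y lam bet As t')
  end.

Definition batch_of n T (s : {ffun 'I_T -> {set 'I_n}}) (t : nat) : {set 'I_n} :=
  match @insub _ (fun k => k < T)%N 'I_T t with Some k => s k | None => finset.set0 end.

Definition alpha_bar n d (x : 'I_n -> 'rV[R]_d) (y : 'I_n -> R) (lam bet : R)
  (T0 T : nat) (s : {ffun 'I_T -> {set 'I_n}}) : 'I_n -> R :=
  fun i => (T%:R - T0%:R)^-1 *
           \sum_(T0 <= t < T) alpha_it x y lam bet (batch_of s) t i.

(* the sample space: T independent batches, each a b-subset of {1..n}, uniform *)
Definition batch_seqs n b T : {set {ffun 'I_T -> {set 'I_n}}} :=
  [set s : {ffun 'I_T -> {set 'I_n}} | [forall k, #|s k| == b]].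

Definition Expect n b T (f : {ffun 'I_T -> {set 'I_n}} -> R) : R :=
  (#|batch_seqs n b T|%:R)^-1 * \sum_(s in batch_seqs n b T) f s.

End SDCA.

(* Main.v *)
Require Import Defs.
From HB Require Import structures.
From mathcomp Require Import all_boot all_order all_algebra perm.
From mathcomp Require Import classical_sets reals exp sequences.
From mathcomp Require Import ring lra.
Import Order.TTheory GRing.Theory Num.Theory.
Local Open Scope ring_scope.
Set Implicit Arguments. Unset Strict Implicit. Unset Printing Implicit Defensive.

Section Vec.
Variable R : realType.
Variable d : nat.
Implicit Types u v w : 'rV[R]_d.

Lemma dotvC u v : dotv u v = dotv v u.
Proof. by apply: eq_bigr => k _; rewrite mulrC. Qed.

Lemma dotv_sumZl (I : finType) (c : I -> R) (z : I -> 'rV[R]_d) v :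
  dotv (\sum_i c i *: z i) v = \sum_i c i * dotv (z i) v.
Proof.
rewrite /dotv; under eq_bigr do rewrite summxE mulr_suml.
rewrite exchange_big; apply: eq_bigr => i _; rewrite mulr_sumr.
by apply: eq_bigr => k _; rewrite mxE mulrA.
Qed.

Lemma dotvZl c u v : dotv (c *: u) v = c * dotv u v.
Proof. rewrite /dotv mulr_sumr; apply: eq_bigr => k _; by rewrite mxE mulrA. Qed.

Lemma dotvDl u1 u2 v : dotv (u1 + u2) v = dotv u1 v + dotv u2 v.
Proof. rewrite /dotv -big_split; apply: eq_bigr => k _; by rewrite mxE mulrDl. Qed.

Lemma dotvBl u1 u2 v : dotv (u1 - u2) v = dotv u1 v - dotv u2 v.
Proof.
rewrite /dotv -sumrB; apply: eq_bigr => k _; by rewrite !mxE mulrBl.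
Qed.

Lemma dotv_ge0 u : 0 <= dotv u u.
Proof. by apply: sumr_ge0 => k _; rewrite -expr2 sqr_ge0. Qed.

Lemma normv_sqr u : normv u ^+ 2 = dotv u u.
Proof. by rewrite /normv sqr_sqrtr // dotv_ge0. Qed.

End Vec.

Lemma clip_in (R : realType) (lo hi z : R) : lo <= hi ->
  lo <= clip lo hi z <= hi.
Proof.
move=> H; rewrite /clip; case: (lerP z lo) => Hz; case: (lerP hi _) => Hh;
  apply/andP; split; lra.
Qed.

Lemma clip_opt (R : realType) (lo hi c k dl : R) : lo <= hi -> 0 < k ->
  lo <= dl <= hi ->
  c * dl - k / 2 * dl ^+ 2 <= c * clip lo hi (c / k) - k / 2 * (clip lo hi (c / k)) ^+ 2.
Proof.
move=> H Hk /andP[H1 H2]; set m := c / k.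
have Hc : c = k * m by rewrite /m mulrC divfK // gt_eqF.
rewrite Hc /clip; case: (lerP m lo) => Hz; case: (lerP hi _) => Hh.
- have E : dl = hi by lra. by rewrite E; lra.
- have : 0 <= k * ((dl - lo) * (dl + lo - 2 * m)) by apply: mulr_ge0; [lra|apply: mulr_ge0; lra].
  nra.
- have : 0 <= k * ((hi - dl) * (2 * m - hi - dl)) by apply: mulr_ge0; [lra|apply: mulr_ge0; lra].
  nra.
- have : 0 <= k * (dl - m) ^+ 2 by apply: mulr_ge0; [lra|apply: sqr_ge0]. nra.
Qed.

Section Main.
Variable R : realType.
Variables n d : nat.
Variable x : 'I_n -> 'rV[R]_d.
Variable y : 'I_n -> R.
Variable lam : R.
Hypothesis hlam : 0 < lam.
Hypothesis hn : (0 < n)%N.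

Local Notation W := (wof x y lam).
Local Notation D := (Dobj x y lam).
Local Notation P := (Pobj x y lam).
Definition cc (a : 'I_n -> R) i := 1 - y i * dotv (W a) (x i).

Lemma n_gt0 : 0 < (n%:R : R). Proof. by rewrite ltr0n. Qed.
Lemma ln_neq0 : lam * n%:R != 0.
Proof. by rewrite mulf_neq0 // gt_eqF // ?n_gt0. Qed.

Lemma dotv_wof a u :
  dotv (W a) u = (lam * n%:R)^-1 * \sum_i a i * y i * dotv (x i) u.
Proof. by rewrite /wof dotvZl dotv_sumZl. Qed.

Lemma dotv_wofr a u :
  dotv u (W a) = (lam * n%:R)^-1 * \sum_i a i * y i * dotv u (x i).
Proof.
rewrite dotvC dotv_wof; congr (_ * _); apply: eq_bigr => i _; by rewrite dotvC.
Qed.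

Lemma wofD a h a' : (forall i, a' i = a i + h i) -> W a' = W a + W h.
Proof.
move=> Ha; rewrite /wof -scalerDr -big_split; congr (_ *: _).
by apply: eq_bigr => i _; rewrite Ha mulrDl scalerDl.
Qed.

Lemma Dobj_E a : D a = - (lam / 2) * dotv (W a) (W a) + n%:R^-1 * \sum_i a i.
Proof.
rewrite /Dobj; congr (_ + _).
rewrite dotv_wof.
have -> : \sum_i a i * y i * dotv (x i) (W a) =
   (lam * n%:R)^-1 * \sum_i \sum_j a i * Qmat x y i j * a j.
  rewrite mulr_sumr; apply: eq_bigr => i _; rewrite dotv_wofr mulrCA.
  congr (_ * _); rewrite mulr_sumr; apply: eq_bigr => j _; rewrite /Qmat; ring.
have := ln_neq0; have := n_gt0; move=> Hn0 Hl0.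
field; rewrite ?gt_eqF //; apply/andP; split=> //; rewrite gt_eqF //.
Qed.

Lemma dotvDr (u v1 v2 : 'rV[R]_d) : dotv u (v1 + v2) = dotv u v1 + dotv u v2.
Proof. by rewrite dotvC dotvDl !(dotvC _ u). Qed.

Lemma D_step a h a' : (forall i, a' i = a i + h i) ->
  D a' = D a + n%:R^-1 * \sum_i h i * cc a i - lam / 2 * dotv (W h) (W h).
Proof.
move=> Ha; rewrite !Dobj_E (wofD Ha) dotvDl !dotvDr (dotvC (W h) (W a)).
rewrite [dotv (W a) (W h)]dotv_wofr.
have -> : \sum_i a' i = \sum_i a i + \sum_i h i.
  by rewrite -big_split; apply: eq_bigr => i _; rewrite Ha.
have -> : \sum_i h i * cc a i = \sum_i h i - \sum_i h i * y i * dotv (W a) (x i).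
  by rewrite -sumrB; apply: eq_bigr => i _; rewrite /cc; ring.
have := ln_neq0; have := n_gt0; move=> Hn0 Hl0.
field; rewrite ?gt_eqF //; apply/andP; split=> //; rewrite gt_eqF //.
Qed.

Lemma sum_a_cc a :
  \sum_i a i * cc a i = \sum_i a i - lam * n%:R * dotv (W a) (W a).
Proof.
rewrite [dotv (W a) (W a)]dotv_wofr mulrA mulfV ?ln_neq0 // mul1r -sumrB.
by apply: eq_bigr => i _; rewrite /cc; ring.
Qed.

Definition inI (a : 'I_n -> R) := forall i, 0 <= a i <= 1.

Lemma weak_dual a w : inI a -> D a <= P w.
Proof.
move=> Ha; rewrite Dobj_E /Pobj normv_sqr.
have H1 : \sum_i a i * (1 - y i * dotv w (x i)) <= \sum_i Num.max 0 (1 - y i * dotv w (x i)).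
  apply: ler_sum => i _; have /andP[h0 h1] := Ha i.
  case: (lerP 0 (1 - y i * dotv w (x i))) => Hc; nra.
have H2 : \sum_i a i * (1 - y i * dotv w (x i)) =
   \sum_i a i - lam * n%:R * dotv w (W a).
  rewrite dotv_wofr mulrA mulfV ?ln_neq0 // mul1r -sumrB.
  by apply: eq_bigr => i _; ring.
have H3 : 0 <= dotv (w - W a) (w - W a) by apply: dotv_ge0.
rewrite !dotvBl !(dotvC _ (w - W a)) !dotvBl (dotvC (W a) w) in H3.
have := n_gt0; move=> Hn0.
have H4 : n%:R^-1 * \sum_i a i * (1 - y i * dotv w (x i)) <=
          n%:R^-1 * \sum_i Num.max 0 (1 - y i * dotv w (x i)).
  by rewrite ler_pM2l ?invr_gt0.
have E : n%:R^-1 * (lam * n%:R * dotv w (W a)) = lam * dotv w (W a).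
  by field; rewrite gt_eqF.
rewrite H2 mulrBr E in H4.
have H5 := mulr_ge0 (ltW hlam) H3. nra.
Qed.

Variable bet : R.
Hypothesis hbet : 0 < bet.

Definition delta (a : 'I_n -> R) i :=
  clip (- a i) (1 - a i) (lam * n%:R * cc a i / bet).

Definition Qf (a dl : 'I_n -> R) :=
  n%:R^-1 * \sum_i dl i * cc a i - bet / (2 * lam * n%:R ^+ 2) * \sum_i dl i ^+ 2.

Lemma Qf_opt a dl : inI a -> (forall i, - a i <= dl i <= 1 - a i) ->
  Qf a dl <= Qf a (delta a).
Proof.
move=> Ha Hdl; rewrite /Qf !mulr_sumr -!sumrB; apply: ler_sum => i _.
have Hn0 := n_gt0.
have Hk : 0 < bet / (lam * n%:R) by rewrite divr_gt0 // mulr_gt0.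
have Hlh : - a i <= 1 - a i by lra.
have := clip_opt (cc a i) Hlh Hk (Hdl i).
have -> : cc a i / (bet / (lam * n%:R)) = lam * n%:R * cc a i / bet.
  by field; rewrite !gt_eqF.
rewrite -/(delta a i) => H.
have E : forall z, n%:R^-1 * (z * cc a i) - bet / (2 * lam * n%:R ^+ 2) * z ^+ 2
   = n%:R^-1 * (cc a i * z - bet / (lam * n%:R) / 2 * z ^+ 2).
  by move=> z; field; rewrite !gt_eqF.
by rewrite !E ler_pM2l ?invr_gt0.
Qed.

Definition gap a := P (W a) - D a.

Lemma gap_ge a : inI a -> 0 <= gap a.
Proof. by move=> Ha; rewrite subr_ge0 weak_dual. Qed.

Lemma Qf_s a s : inI a -> 0 <= s <= 1 -> (forall i, y i ^+ 2 = 1) ->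
  s * gap a - bet * s ^+ 2 / (2 * lam * n%:R)
  <= Qf a (fun i => s * ((0 < cc a i)%R%:R - a i)).
Proof.
move=> Ha /andP[s0 s1] hy; rewrite /Qf.
have Hn0 := n_gt0.
have E1 : \sum_i s * ((0 < cc a i)%R%:R - a i) * cc a i =
   s * (\sum_i Num.max 0 (cc a i) - (\sum_i a i - lam * n%:R * dotv (W a) (W a))).
  rewrite -sum_a_cc -sumrB mulr_sumr; apply: eq_bigr => i _.
  case: (lerP (cc a i) 0) => Hc.
  - by rewrite /= mulr0n; ring.
  - by rewrite /= mulr1n; ring.
have E2 : \sum_i (s * ((0 < cc a i)%R%:R - a i)) ^+ 2 <= s ^+ 2 * n%:R.
  have -> : s ^+ 2 * n%:R = \sum_(i < n) s ^+ 2.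
    by rewrite sumr_const card_ord mulr_natr.
  apply: ler_sum => i _; have /andP[h0 h1] := Ha i.
  rewrite exprMn; apply: ler_piMr; first exact: sqr_ge0.
  case: (0 < cc a i); rewrite /= ?mulr1n ?mulr0n; nra.
rewrite E1.
have H3 : bet / (2 * lam * n%:R ^+ 2) * \sum_i (s * ((0 < cc a i)%R%:R - a i)) ^+ 2
   <= bet / (2 * lam * n%:R ^+ 2) * (s ^+ 2 * n%:R).
  by rewrite ler_pM2l // divr_gt0 // !mulr_gt0 // exprn_gt0.
have -> : bet * s ^+ 2 / (2 * lam * n%:R) = bet / (2 * lam * n%:R ^+ 2) * (s ^+ 2 * n%:R).
  by field; rewrite !gt_eqF.
suff -> : s * gap a = n%:R^-1 * (s * (\sum_i Num.max 0 (cc a i) -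
            (\sum_i a i - lam * n%:R * dotv (W a) (W a)))) by lra.
rewrite /gap Dobj_E /Pobj normv_sqr.
have -> : \sum_i Num.max 0 (1 - y i * dotv (W a) (x i)) = \sum_i Num.max 0 (cc a i) by [].
by field; rewrite gt_eqF.
Qed.

End Main.

Section Comb.
Variable R : realFieldType.
Variables n b : nat.
Definition Sb := [set A : {set 'I_n} | #|A| == b].
Local Notation S := Sb.

Lemma perm_sum (s : {perm 'I_n}) (F : {set 'I_n} -> R) :
  \sum_(A in S) F A = \sum_(A in S) F (s @: A).
Proof.
rewrite (reindex_inj (imset_inj (@perm_inj _ s))) /=.
apply: eq_bigl => A; by rewrite !inE card_imset //; apply: perm_inj.
Qed.

Definition c1 i : R := \sum_(A in S) (i \in A)%:R.
Definition c2 i j : R := \sum_(A in S) ((i \in A) && (j \in A))%:R.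

Lemma c1_sym i j : c1 i = c1 j.
Proof.
rewrite /c1 (perm_sum (tperm i j)); apply: eq_bigr => A _.
by rewrite -{1}(tpermR i j) mem_imset //; apply: perm_inj.
Qed.

Lemma sum_in (A : {set 'I_n}) : \sum_i (i \in A)%:R = #|A|%:R :> R.
Proof.
rewrite -sum1_card natr_sum [RHS]big_mkcond /=; apply: eq_bigr => i _.
by case: (i \in A).
Qed.

Lemma c1_val i : n%:R * c1 i = #|S|%:R * b%:R.
Proof.
have -> : n%:R * c1 i = \sum_(j < n) c1 j.
  by rewrite (eq_bigr (fun _ => c1 i)) ?sumr_const ?card_ord ?mulr_natl // => j _; apply: c1_sym.
rewrite /c1 exchange_big /= -sum1_card natr_sum mulr_suml; apply: eq_bigr => A.
by rewrite inE sum_in => /eqP ->; rewrite mul1r.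
Qed.

Lemma c2_sym i j j' : j != i -> j' != i -> c2 i j = c2 i j'.
Proof.
move=> Hj Hj'; rewrite /c2 (perm_sum (tperm j j')); apply: eq_bigr => A _.
rewrite -[X in (_ && (X \in _))](tpermR j j') mem_imset; last by apply: perm_inj.
by rewrite -{1}(@tpermD _ j j' i Hj Hj') mem_imset //; apply: perm_inj.
Qed.

Lemma c2_diag i : c2 i i = c1 i.
Proof. by rewrite /c2 /c1; apply: eq_bigr => A _; rewrite andbb. Qed.

Lemma c2_val i j : (1 < n)%N -> j != i ->
  (n%:R - 1) * c2 i j = c1 i * (b%:R - 1).
Proof.
move=> Hn Hj.
have E1 : \sum_(k < n) c2 i k = b%:R * c1 i.
  rewrite /c2 exchange_big /c1 mulr_sumr; apply: eq_bigr => A.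
  rewrite inE => /eqP HA.
  have -> : \sum_k ((i \in A) && (k \in A))%:R = (i \in A)%:R * \sum_k (k \in A)%:R :> R.
    by rewrite mulr_sumr; apply: eq_bigr => k _; by case: (i \in A); rewrite /= ?mul1r ?mul0r.
  by rewrite sum_in HA mulrC.
rewrite (bigD1 i) //= c2_diag in E1.
have E2 : \sum_(k < n | k != i) c2 i k = (n%:R - 1) * c2 i j.
  rewrite (eq_bigr (fun _ => c2 i j)); last by move=> k Hk; apply: c2_sym.
  rewrite sumr_const cardC1 card_ord -mulr_natl.
  have Hp : (0 < n)%N by apply: ltn_trans Hn.
  have -> : n%:R = (n.-1)%:R + 1 :> R by rewrite natr1 prednK.
  by rewrite mulr1 addrK mulr_natl.
have E3 : \sum_(k < n | k != i) c2 i k = (b%:R - 1) * c1 i by lra.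
by rewrite -E2 E3 mulrC.
Qed.

Definition c1v : R := #|S|%:R * b%:R / n%:R.
Definition c2v : R := #|S|%:R * b%:R * (b%:R - 1) / (n%:R * (n%:R - 1)).

Lemma c1E i : (0 < n)%N -> c1 i = c1v.
Proof.
move=> Hn; have Hn0 : (n%:R : R) != 0 by rewrite pnatr_eq0 -lt0n.
by rewrite /c1v -(c1_val i) (mulrC n%:R) mulfK.
Qed.

Lemma c2E i j : (1 < n)%N -> j != i -> c2 i j = c2v.
Proof.
move=> Hn Hj; have Hp : (0 < n)%N by apply: ltn_trans Hn.
have Hn0 : (n%:R : R) != 0 by rewrite pnatr_eq0 -lt0n.
have Hn1 : (n%:R - 1 : R) != 0.
  by rewrite subr_eq0 pnatr_eq1 gtn_eqF.
have := c2_val Hn Hj; rewrite c1E // /c1v /c2v => H.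
apply: (mulfI Hn1); rewrite H; field; by apply/andP.
Qed.

Lemma sum_lin (f : 'I_n -> R) : (0 < n)%N ->
  \sum_(A in S) \sum_i (i \in A)%:R * f i = c1v * \sum_i f i.
Proof.
move=> Hn; rewrite exchange_big mulr_sumr; apply: eq_bigr => i _.
by rewrite -mulr_suml -/(c1 i) c1E.
Qed.

Lemma sum_quad (M : 'I_n -> 'I_n -> R) : (1 < n)%N ->
  \sum_(A in S) \sum_i \sum_j ((i \in A)%:R * (j \in A)%:R * M i j)
  = (c1v - c2v) * \sum_i M i i + c2v * \sum_i \sum_j M i j.
Proof.
move=> Hn; have Hp : (0 < n)%N by apply: ltn_trans Hn.
rewrite exchange_big mulr_sumr mulr_sumr -big_split; apply: eq_bigr => i _ /=.
rewrite exchange_big mulr_sumr (bigD1 i) //= [in RHS](bigD1 i) //=.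
have -> : \sum_(A in S) (i \in A)%:R * (i \in A)%:R * M i i = c1v * M i i.
  rewrite -mulr_suml -(c1E i Hp); congr (_ * _); apply: eq_bigr => A _.
  by case: (i \in A); rewrite ?mulr1 ?mulr0.
have -> : \sum_(j < n | j != i) \sum_(A in S) (i \in A)%:R * (j \in A)%:R * M i j
   = \sum_(j < n | j != i) c2v * M i j.
  apply: eq_bigr => j Hj; rewrite -mulr_suml -(c2E Hn Hj); congr (_ * _).
  apply: eq_bigr => A _.
  by case: (i \in A); case: (j \in A); rewrite /= ?mulr1 ?mulr0 ?mul0r.
rewrite -mulr_sumr; ring.
Qed.

Lemma S_card_gt0 : (b <= n)%N -> (0 < #|S|)%N.
Proof. by move=> Hb; rewrite /Sb card_draws card_ord bin_gt0. Qed.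

End Comb.

Section Spec.
Local Open Scope classical_set_scope.
Variable R : realType.
Variables n d : nat.
Variable x : 'I_n -> 'rV[R]_d.
Local Notation X := (Xmat x).

Lemma sq_le1 (u : 'cV[R]_n) i : normc u <= 1 -> -1 <= u i 0 <= 1.
Proof.
move=> Hu.
have H0 : 0 <= \sum_k u k 0 ^+ 2 by apply: sumr_ge0 => k _; apply: sqr_ge0.
have H1 : \sum_k u k 0 ^+ 2 <= 1.
  have := sqrtr_ge0 (\sum_k u k 0 ^+ 2); rewrite /normc in Hu => Hs.
  have : normc u ^+ 2 <= 1 by rewrite /normc; nra.
  by rewrite /normc sqr_sqrtr.
have H2 : u i 0 ^+ 2 <= \sum_k u k 0 ^+ 2.
  rewrite (bigD1 i) //= lerDl; apply: sumr_ge0 => k _; apply: sqr_ge0.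
apply/andP; split; nra.
Qed.

Definition Bk k : R := \sum_i `|X k i|.

Lemma spec_ub : has_ubound [set normc (X *m u) | u in [set u : 'cV[R]_n | normc u <= 1]].
Proof.
exists (Num.sqrt (\sum_k Bk k ^+ 2)) => t [u /= Hu <-].
rewrite /normc ler_sqrt; last by apply: sumr_ge0 => k _; apply: sqr_ge0.
apply: ler_sum => k _.
have Hb : `|(X *m u) k 0| <= Bk k.
  rewrite mxE; apply: le_trans (ler_norm_sum _ _ _) _; apply: ler_sum => i _.
  rewrite normrM; have /andP[h1 h2] := sq_le1 i Hu.
  apply: ler_piMr => //; rewrite ler_norml; lra.
have := normr_ge0 ((X *m u) k 0); rewrite -[((X *m u) k 0) ^+ 2]real_normK ?num_real //; nra.
Qed.

Lemma spec_bound (g : 'I_n -> R) :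
  dotv (\sum_i g i *: x i) (\sum_i g i *: x i) <= specnorm X ^+ 2 * \sum_i g i ^+ 2.
Proof.
set v := \sum_i g i *: x i.
have Hv : forall k, v 0 k = \sum_i g i * x i 0 k.
  by move=> k; rewrite /v summxE; apply: eq_bigr => i _; rewrite mxE.
have HX : forall (u : 'cV[R]_n) k, (X *m u) k 0 = \sum_i x i 0 k * u i 0.
  by move=> u k; rewrite mxE; apply: eq_bigr => i _; rewrite mxE.
set r2 := \sum_i g i ^+ 2.
have Hr2 : 0 <= r2 by apply: sumr_ge0 => i _; apply: sqr_ge0.
have [Hz|Hpos] := eqVneq r2 0.
  have Hg : forall i, g i = 0.
    move=> i; apply/eqP; rewrite -sqrf_eq0; apply/eqP.
    move/eqP: Hz; rewrite psumr_eq0; last by move=> j _; apply: sqr_ge0.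
    by move/allP => /(_ i (mem_index_enum i)) /= /eqP.
  rewrite Hz mulr0 /dotv; rewrite big1 // => k _; rewrite Hv big1 ?mul0r //.
  by move=> i _; rewrite Hg mul0r.
have Hr : 0 < r2 by rewrite lt_neqAle eq_sym Hpos.
set r := Num.sqrt r2.
have Hr0 : 0 < r by rewrite sqrtr_gt0.
have Hrr : r ^+ 2 = r2 by rewrite sqr_sqrtr.
set u : 'cV[R]_n := \col_i (r^-1 * g i).
have Hu : normc u <= 1.
  rewrite /normc.
  have -> : \sum_k u k 0 ^+ 2 = 1.
    rewrite (eq_bigr (fun k => r^-2 * g k ^+ 2)); last by move=> k _; rewrite mxE exprMn exprVn.
    by rewrite -mulr_sumr -/r2 -Hrr mulVf // expf_neq0 // gt_eqF.
  by rewrite sqrtr1.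
have Hin : [set normc (X *m u) | u in [set u : 'cV[R]_n | normc u <= 1]] (normc (X *m u)).
  by exists u.
have Hle := ub_le_sup spec_ub Hin.
have Hge := sqrtr_ge0 (\sum_k (X *m u) k 0 ^+ 2).
have Hsq : normc (X *m u) ^+ 2 <= specnorm X ^+ 2.
  rewrite /specnorm; rewrite /normc in Hle Hge *; nra.
have E : normc (X *m u) ^+ 2 = r^-2 * dotv v v.
  rewrite /normc sqr_sqrtr; last by apply: sumr_ge0 => k _; apply: sqr_ge0.
  rewrite /dotv mulr_sumr; apply: eq_bigr => k _.
  rewrite HX Hv -expr2 -exprVn -exprMn mulr_sumr; congr (_ ^+ 2).
  by apply: eq_bigr => i _; rewrite mxE; ring.
rewrite E in Hsq.
have : dotv v v = r ^+ 2 * (r^-2 * dotv v v) by rewrite mulrA mulfV ?mul1r // expf_neq0 // gt_eqF.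
move=> ->; rewrite Hrr mulrC ler_pM2r //.
by rewrite -Hrr.
Qed.

End Spec.

Section Step.
Variable R : realType.
Variables n d : nat.
Variable x : 'I_n -> 'rV[R]_d.
Variable y : 'I_n -> R.
Variables lam sigma : R.
Variable b : nat.
Hypothesis hlam : 0 < lam.
Hypothesis hn : (1 < n)%N.
Hypothesis hb1 : (1 <= b)%N.
Hypothesis hbn : (b <= n)%N.
Hypothesis hy : forall i, y i ^+ 2 = 1.
Hypothesis hx : forall i, dotv (x i) (x i) <= 1.
Hypothesis hsig : specnorm (Xmat x) ^+ 2 <= n%:R * sigma ^+ 2.
Local Notation bet := (beta n b sigma).
Hypothesis hbet : 0 < bet.

Local Notation W := (wof x y lam).
Local Notation D := (Dobj x y lam).
Local Notation S := (Sb n b).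
Local Notation K := (#|S|%:R : R).

Lemma hn0 : (0 < n)%N. Proof. by apply: ltn_trans hn. Qed.

Lemma ww_gram h : dotv (W h) (W h) = (lam * n%:R)^-2 *
  \sum_i \sum_j (h i * y i) * (h j * y j) * dotv (x i) (x j).
Proof.
rewrite /wof dotvZl dotvC dotvZl dotv_sumZl mulrA -expr2 exprVn; congr (_ * _).
apply: eq_bigr => i _; rewrite dotvC dotv_sumZl mulr_sumr.
by apply: eq_bigr => j _; rewrite dotvC; ring.
Qed.

Lemma K_gt0 : 0 < K. Proof. by rewrite ltr0n S_card_gt0. Qed.

Lemma ESO h :
  K^-1 * \sum_(A in S) dotv (W (fun i => (i \in A)%:R * h i)) (W (fun i => (i \in A)%:R * h i))
  <= b%:R / n%:R * bet * (lam * n%:R)^-2 * \sum_i h i ^+ 2.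
Proof.
have HK := K_gt0.
have Hn0 : (0 : R) < n%:R by rewrite ltr0n hn0.
have Hn1 : (1 : R) < n%:R by rewrite ltr1n.
have Hb1 : (1 : R) <= b%:R by rewrite ler1n.
have Hbn : (b%:R : R) <= n%:R by rewrite ler_nat.
under eq_bigr do rewrite ww_gram.
rewrite -mulr_sumr.
set M := fun i j => (h i * y i) * (h j * y j) * dotv (x i) (x j).
have -> : \sum_(A in S) \sum_i \sum_j ((i \in A)%:R * h i * y i) * ((j \in A)%:R * h j * y j) * dotv (x i) (x j)
   = \sum_(A in S) \sum_i \sum_j ((i \in A)%:R * (j \in A)%:R * M i j).
  apply: eq_bigr => A _; apply: eq_bigr => i _; apply: eq_bigr => j _; rewrite /M; ring.
rewrite sum_quad //.
have Hd : \sum_i M i i <= \sum_i h i ^+ 2.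
  apply: ler_sum => i _; rewrite /M.
  have -> : h i * y i * (h i * y i) * dotv (x i) (x i) = h i ^+ 2 * (y i ^+ 2 * dotv (x i) (x i)) by ring.
  rewrite hy mul1r; apply: ler_piMr; [exact: sqr_ge0 | exact: hx].
have Hq : \sum_i \sum_j M i j <= n%:R * sigma ^+ 2 * \sum_i h i ^+ 2.
  have -> : \sum_i \sum_j M i j = dotv (\sum_i (h i * y i) *: x i) (\sum_i (h i * y i) *: x i).
    rewrite dotv_sumZl; apply: eq_bigr => i _; rewrite dotvC dotv_sumZl mulr_sumr.
    by apply: eq_bigr => j _; rewrite /M dotvC; ring.
  apply: le_trans (spec_bound _ _) _.
  have -> : \sum_i (h i * y i) ^+ 2 = \sum_i h i ^+ 2.
    by apply: eq_bigr => i _; rewrite exprMn hy mulr1.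
  by apply: ler_wpM2r => //; apply: sumr_ge0 => i _; apply: sqr_ge0.
have Hc1 : c1v R n b = K * b%:R / n%:R by [].
have Hc2 : c2v R n b = K * b%:R * (b%:R - 1) / (n%:R * (n%:R - 1)) by [].
have Hcd : 0 <= c1v R n b - c2v R n b.
  rewrite Hc1 Hc2.
  have -> : K * b%:R / n%:R - K * b%:R * (b%:R - 1) / (n%:R * (n%:R - 1))
     = K * b%:R / n%:R * ((n%:R - b%:R) / (n%:R - 1)).
    by field; rewrite !gt_eqF ?subr_gt0.
  apply: mulr_ge0; first by apply: divr_ge0; [apply: mulr_ge0; lra | lra].
  apply: divr_ge0; lra.
have Hc2p : 0 <= c2v R n b.
  by rewrite Hc2; apply: divr_ge0; [apply: mulr_ge0; [apply: mulr_ge0|]; lra| apply: mulr_ge0; lra].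
set H2 := \sum_i h i ^+ 2.
have H2p : 0 <= H2 by apply: sumr_ge0 => i _; apply: sqr_ge0.
have Hsum : (c1v R n b - c2v R n b) * \sum_i M i i + c2v R n b * \sum_i \sum_j M i j
   <= (c1v R n b - c2v R n b) * H2 + c2v R n b * (n%:R * sigma ^+ 2 * H2).
  by apply: lerD; apply: ler_wpM2l.
have Hl : 0 < (lam * n%:R)^-2 by rewrite invr_gt0 exprn_gt0 // mulr_gt0.
have := ler_wpM2l (ltW Hl) Hsum => Hs2.
have HKi : 0 <= K^-1 by rewrite invr_ge0 ltW.
apply: le_trans (ler_wpM2l HKi Hs2) _.
rewrite Hc1 Hc2 /beta le_eqVlt; apply/orP; left; apply/eqP.
by field; rewrite !gt_eqF ?subr_gt0.
Qed.

Lemma step_eq A a i : sdca_step x y lam bet A a i = a i + (i \in A)%:R * delta x y lam bet a i.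
Proof. by rewrite /sdca_step /delta /cc; case: (i \in A); rewrite ?mul1r ?mul0r ?addr0. Qed.

Lemma step_avg a s : inI a -> 0 <= s <= 1 ->
  D a + b%:R / n%:R * (s * gap x y lam a - bet * s ^+ 2 / (2 * lam * n%:R))
  <= K^-1 * \sum_(A in S) D (sdca_step x y lam bet A a).
Proof.
move=> Ha Hs.
have hn1 : (0 < n)%N := hn0.
have HK := K_gt0.
have Hn0 : (0 : R) < n%:R by rewrite ltr0n hn0.
set dl := delta x y lam bet a.
have E : forall A, D (sdca_step x y lam bet A a) = D a
    + n%:R^-1 * \sum_i ((i \in A)%:R * dl i) * cc x y lam a i
    - lam / 2 * dotv (W (fun i => (i \in A)%:R * dl i)) (W (fun i => (i \in A)%:R * dl i)).
  by move=> A; apply: D_step => // i; rewrite step_eq.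
under eq_bigr do rewrite E.
rewrite sumrB big_split /= sumr_const -mulr_sumr.
have -> : \sum_(A in S) \sum_i (i \in A)%:R * dl i * cc x y lam a i
   = \sum_(A in S) \sum_i (i \in A)%:R * (dl i * cc x y lam a i).
  by apply: eq_bigr => A _; apply: eq_bigr => i _; rewrite mulrA.
rewrite sum_lin // -mulr_sumr.
have Hes := ESO dl.
have Hbox : forall i, - a i <= s * ((0 < cc x y lam a i)%R%:R - a i) <= 1 - a i.
  move=> i; have /andP[h0 h1] := Ha i; have /andP[s0 s1] := Hs.
  case: (0 < cc x y lam a i); rewrite /= ?mulr1n ?mulr0n; apply/andP; split; nra.
have Hq1 := Qf_opt x y hlam hn1 hbet Ha Hbox.
have Hq2 := Qf_s x hlam hn1 hbet Ha Hs hy.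
have Hq := le_trans Hq2 Hq1.
rewrite /Qf -/dl in Hq.
set G := s * gap x y lam a - bet * s ^+ 2 / (2 * lam * n%:R) in Hq *.
set L := \sum_i dl i * cc x y lam a i in Hq *.
set Q2 := \sum_i dl i ^+ 2 in Hq Hes *.
set Wt := \sum_(A in S) _ in Hes *.
have -> : K^-1 * (D a *+ #|S| + (n%:R^-1 * (c1v R n b * L)) - lam / 2 * Wt)
   = D a + b%:R / n%:R * (n%:R^-1 * L) - lam / 2 * (K^-1 * Wt).
  rewrite /c1v -mulr_natr; field; by rewrite !gt_eqF.
have Hl2 : lam / 2 * (K^-1 * Wt) <= lam / 2 * (b%:R / n%:R * bet * (lam * n%:R)^-2 * Q2).
  by rewrite ler_pM2l // divr_gt0.
have Hl3 : lam / 2 * (K^-1 * Wt) <= b%:R / n%:R * (bet / (2 * lam * n%:R ^+ 2) * Q2).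
  apply: le_trans Hl2 _; rewrite le_eqVlt; apply/orP; left; apply/eqP.
  by field; rewrite !gt_eqF.
have Hbn0 : 0 <= (b%:R : R) / n%:R by apply: divr_ge0; rewrite ler0n.
have := ler_wpM2l Hbn0 Hq.
rewrite mulrBr => H3.
lra.
Qed.

End Step.

Section Exp.
Variable R : realType.
Variables n b T : nat.
Hypothesis hbn : (b <= n)%N.
Local Notation BS := (batch_seqs n b T).
Local Notation S := (Sb n b).
Local Notation E := (@Expect R n b T).
Local Notation K := (#|S|%:R : R).
Local Notation sq := {ffun 'I_T -> {set 'I_n}}.

Lemma BS_gt0 : (0 < #|BS|)%N.
Proof.
have := S_card_gt0 hbn; case/card_gt0P => A0 HA0.
apply/card_gt0P; exists [ffun => A0]; rewrite inE; apply/forallP => k.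
by rewrite ffunE; rewrite inE in HA0.
Qed.

Lemma BSr_gt0 : (0 : R) < #|BS|%:R. Proof. by rewrite ltr0n BS_gt0. Qed.

Lemma E_le f g : (forall s, f s <= g s) -> E f <= E g.
Proof.
move=> H; rewrite /Expect ler_wpM2l ?invr_ge0 ?ler0n //.
by apply: ler_sum => s _.
Qed.

Lemma E_add f g : E (fun s => f s + g s) = E f + E g.
Proof. by rewrite /Expect big_split mulrDr. Qed.

Lemma E_scale c f : E (fun s => c * f s) = c * E f.
Proof. rewrite /Expect -mulr_sumr; ring. Qed.

Lemma E_opp f : E (fun s => - f s) = - E f.
Proof. by rewrite /Expect sumrN mulrN. Qed.

Lemma E_sub f g : E (fun s => f s - g s) = E f - E g.
Proof. by rewrite E_add E_opp. Qed.

Lemma E_const c : E (fun _ => c) = c.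
Proof.
have H := BSr_gt0; rewrite /Expect sumr_const -[c *+ _]mulr_natr.
by field; rewrite gt_eqF.
Qed.

Lemma E_sum (I : Type) (r : seq I) (F : I -> sq -> R) :
  E (fun s => \sum_(t <- r) F t s) = \sum_(t <- r) E (F t).
Proof.
rewrite /Expect exchange_big mulr_sumr; by [].
Qed.

Definition upd (s : sq) (k : 'I_T) (A : {set 'I_n}) : sq :=
  [ffun j => if j == k then A else s j].

Lemma updK s k A : upd (upd s k A) k (s k) = s.
Proof. by apply/ffunP => j; rewrite !ffunE; case: eqP => // ->. Qed.

Lemma upd_k s k A : upd s k A k = A.
Proof. by rewrite ffunE eqxx. Qed.

Lemma mem_upd s k A :
  (upd s k A \in BS) && (s k \in S) = (s \in BS) && (A \in S).
Proof.
rewrite !inE; apply/idP/idP.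
- case/andP => /forallP H Hk; apply/andP; split.
  + apply/forallP => j; have := H j; rewrite ffunE; case: (eqVneq j k) => [-> _|_ //]; exact: Hk.
  + by have := H k; rewrite upd_k.
- case/andP => /forallP H HA; apply/andP; split.
  + apply/forallP => j; rewrite ffunE; case: (eqVneq j k) => [_|_]; [exact: HA|exact: H].
  + exact: H.
Qed.

Lemma E_swap k (Psi : sq -> {set 'I_n} -> R) :
  (forall s A A', Psi (upd s k A') A = Psi s A) ->
  E (fun s => Psi s (s k)) = E (fun s => K^-1 * \sum_(A in S) Psi s A).
Proof.
move=> HPsi; rewrite /Expect; congr (_ * _).
rewrite -mulr_sumr.
have HK : K != 0 by rewrite pnatr_eq0 -lt0n S_card_gt0.
apply: (mulfI HK); rewrite mulrA mulfV // mul1r.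
rewrite (pair_big (fun s => s \in BS) (fun A => A \in S)) /=.
set phi := fun p : sq * {set 'I_n} => (upd p.1 k p.2, p.1 k).
have Hphi : injective phi.
  apply: (can_inj (g := phi)) => [[s A]]; by rewrite /phi /= updK upd_k.
rewrite (reindex_inj Hphi) /=.
rewrite (eq_big (fun p => (p.1 \in BS) && (p.2 \in S)) (fun p => Psi p.1 (p.1 k))); first last.
- by move=> [s A] /= _; rewrite HPsi.
- by move=> [s A] /=; rewrite mem_upd.
rewrite -(pair_big (fun s => s \in BS) (fun A => A \in S) (fun s A => Psi s (s k))) /=.
rewrite mulr_sumr; apply: eq_bigr => s _; by rewrite sumr_const mulr_natl.
Qed.

End Exp.

Section Iter.
Variable R : realType.
Variables n d : nat.
Variable x : 'I_n -> 'rV[R]_d.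
Variable y : 'I_n -> R.
Variables lam sigma : R.
Variables b T : nat.
Hypothesis hlam : 0 < lam.
Hypothesis hn : (1 < n)%N.
Hypothesis hb1 : (1 <= b)%N.
Hypothesis hbn : (b <= n)%N.
Hypothesis hy : forall i, y i ^+ 2 = 1.
Hypothesis hx : forall i, dotv (x i) (x i) <= 1.
Hypothesis hsig : specnorm (Xmat x) ^+ 2 <= n%:R * sigma ^+ 2.
Local Notation bet := (beta n b sigma).
Hypothesis hbet : 0 < bet.
Local Notation sq := {ffun 'I_T -> {set 'I_n}}.
Local Notation D := (Dobj x y lam).
Local Notation E := (@Expect R n b T).
Definition al (s : sq) t := alpha_it x y lam bet (batch_of s) t.

Lemma batch_of_k (s : sq) (k : 'I_T) : batch_of s k = s k.
Proof. by rewrite /batch_of (insubT (fun k => k < T)%N (ltn_ord k)) /=; congr (s _); apply: val_inj. Qed.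

Lemma batch_of_upd (s : sq) (k : 'I_T) A j : j != k :> nat ->
  batch_of (upd s k A) j = batch_of s j.
Proof.
move=> Hj; rewrite /batch_of; case: insubP => [j' _ Hj'|] //.
rewrite ffunE; case: eqP => // Hk; by move: Hj; rewrite -Hj' Hk eqxx.
Qed.

Lemma al_upd (s : sq) (k : 'I_T) A t : (t <= k)%N -> al (upd s k A) t = al s t.
Proof.
elim: t => [|t IH] Ht //=.
rewrite /al /= -/(al _ t) -/(al s t) IH ?(ltnW Ht) // batch_of_upd //.
by rewrite neq_ltn Ht.
Qed.

Lemma al_in s t : inI (al s t).
Proof.
rewrite /al; elim: t => [|t IH] i /=; first by rewrite lexx ler01.
rewrite /sdca_step; case: (i \in _) => //.
have /andP[h0 h1] := IH i.
set a := alpha_it x y lam bet (batch_of s) t.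
have Hl : - a i <= 1 - a i by lra.
have /andP[c0 c1] := clip_in (lam * n%:R * (1 - y i * dotv (wof x y lam a) (x i)) / bet) Hl.
apply/andP; split; lra.
Qed.

Lemma rec t s0 : (t < T)%N -> 0 <= s0 <= 1 ->
  E (fun s => D (al s t)) + b%:R / n%:R * (s0 * E (fun s => gap x y lam (al s t)) - bet * s0 ^+ 2 / (2 * lam * n%:R))
  <= E (fun s => D (al s t.+1)).
Proof.
move=> Ht Hs; set k := Ordinal Ht.
have -> : E (fun s => D (al s t.+1)) = E (fun s => (fun s A => D (sdca_step x y lam bet A (al s t))) s (s k)).
  by rewrite /Expect; congr (_ * _); apply: eq_bigr => s _ /=; rewrite /al /= -(batch_of_k s k).
rewrite (@E_swap R n b T hbn k (fun s A => D (sdca_step x y lam bet A (al s t)))); last by move=> s A A'; rewrite al_upd.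
have -> : E (fun s => D (al s t)) + b%:R / n%:R * (s0 * E (fun s => gap x y lam (al s t)) - bet * s0 ^+ 2 / (2 * lam * n%:R))
  = E (fun s => D (al s t) + b%:R / n%:R * (s0 * gap x y lam (al s t) - bet * s0 ^+ 2 / (2 * lam * n%:R))).
  rewrite E_add (E_scale b _ (fun s => s0 * gap x y lam (al s t) - bet * s0 ^+ 2 / (2 * lam * n%:R))).
  rewrite (E_sub b (fun s => s0 * gap x y lam (al s t)) (fun _ => bet * s0 ^+ 2 / (2 * lam * n%:R))).
  by rewrite (E_scale b _ (fun s => gap x y lam (al s t))) (E_const _ hbn).
apply: E_le => s.
exact: (step_avg hlam hn hb1 hbn hy hx hsig hbet (al_in s t) Hs).
Qed.

End Iter.

Section Jensen.
Variable R : realType.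
Variables n d : nat.
Variable x : 'I_n -> 'rV[R]_d.
Variable y : 'I_n -> R.
Variable lam : R.
Hypothesis hlam : 0 < lam.
Hypothesis hn : (0 < n)%N.
Local Notation W := (wof x y lam).
Local Notation D := (Dobj x y lam).
Local Notation P := (Pobj x y lam).

Lemma dotv_sum_seq (I : Type) (r : seq I) (u : I -> 'rV[R]_d) v :
  dotv (\sum_(t <- r) u t) v = \sum_(t <- r) dotv (u t) v.
Proof.
rewrite /dotv; under eq_bigr do rewrite summxE mulr_suml.
by rewrite exchange_big.
Qed.

Lemma sum_const_seq (I : Type) (r : seq I) (k : R) :
  \sum_(t <- r) k = (size r)%:R * k.
Proof.
elim: r => [|t r IH]; first by rewrite big_nil mul0r.
by rewrite big_cons IH /= -addn1 natrD; ring.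
Qed.

Lemma vec_jensen (I : Type) (r : seq I) (u : I -> 'rV[R]_d) c :
  c * (size r)%:R = 1 -> 0 <= c ->
  dotv (c *: \sum_(t <- r) u t) (c *: \sum_(t <- r) u t) <= c * \sum_(t <- r) dotv (u t) (u t).
Proof.
move=> Hc Hc0; set m := c *: \sum_(t <- r) u t.
have H0 : 0 <= \sum_(t <- r) dotv (u t - m) (u t - m).
  by apply: sumr_ge0 => t _; apply: dotv_ge0.
have E : \sum_(t <- r) dotv (u t - m) (u t - m) =
   \sum_(t <- r) dotv (u t) (u t) - 2 * dotv (\sum_(t <- r) u t) m + (size r)%:R * dotv m m.
  rewrite dotv_sum_seq.
  have -> : (size r)%:R * dotv m m = \sum_(t <- r) dotv m m.
    by rewrite sum_const_seq.
  rewrite mulr_sumr -sumrB -big_split; apply: eq_bigr => t _ /=.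
  rewrite !dotvBl !(dotvC _ (u t - m)) !dotvBl (dotvC m (u t)); ring.
have Em : dotv (\sum_(t <- r) u t) m = (size r)%:R * dotv m m.
  have -> : \sum_(t <- r) u t = (size r)%:R *: m.
    by rewrite /m scalerA mulrC Hc scale1r.
  by rewrite dotvZl.
rewrite E Em in H0.
have : (size r)%:R * dotv m m <= \sum_(t <- r) dotv (u t) (u t) by lra.
move=> H1; have := ler_wpM2l Hc0 H1; rewrite mulrA Hc mul1r.
by [].
Qed.

Lemma wof_avg (I : Type) (r : seq I) (a : I -> 'I_n -> R) c :
  W (fun i => c * \sum_(t <- r) a t i) = c *: \sum_(t <- r) W (a t).
Proof.
rewrite /wof -[in RHS]scaler_sumr [in RHS]scalerA [in RHS]mulrC -[in RHS]scalerA; congr (_ *: _).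
rewrite exchange_big scaler_sumr /=; apply: eq_bigr => i _.
by rewrite -scaler_suml scalerA -mulrA mulr_suml.
Qed.

Lemma gap_E a : gap x y lam a =
  n%:R^-1 * \sum_i Num.max 0 (cc x y lam a i) + lam * dotv (W a) (W a) - n%:R^-1 * \sum_i a i.
Proof.
rewrite /gap (Dobj_E _ _ hlam hn) /Pobj normv_sqr.
have -> : \sum_i Num.max 0 (1 - y i * dotv (W a) (x i)) = \sum_i Num.max 0 (cc x y lam a i) by [].
by field; rewrite pnatr_eq0 -lt0n.
Qed.

Lemma gap_jensen (I : Type) (r : seq I) (a : I -> 'I_n -> R) c :
  c * (size r)%:R = 1 -> 0 <= c ->
  gap x y lam (fun i => c * \sum_(t <- r) a t i) <= c * \sum_(t <- r) gap x y lam (a t).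
Proof.
move=> Hc Hc0; set ab := fun i => c * \sum_(t <- r) a t i.
have Hn0 : (0 : R) < n%:R by rewrite ltr0n.
have -> : \sum_(t <- r) gap x y lam (a t) = \sum_(t <- r) (n%:R^-1 * \sum_i Num.max 0 (cc x y lam (a t) i) + lam * dotv (W (a t)) (W (a t)) - n%:R^-1 * \sum_i a t i).
  by apply: eq_bigr => t _; rewrite gap_E.
rewrite gap_E.
rewrite sumrB big_split /= -!mulr_sumr.
have HW : W ab = c *: \sum_(t <- r) W (a t) by rewrite wof_avg.
have T1 : \sum_i Num.max 0 (cc x y lam ab i) <= c * \sum_(t <- r) \sum_i Num.max 0 (cc x y lam (a t) i).
  rewrite exchange_big mulr_sumr; apply: ler_sum => i _.
  have Ecc : cc x y lam ab i = c * \sum_(t <- r) cc x y lam (a t) i.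
    rewrite /cc HW dotvZl dotv_sum_seq sumrB mulrBr sum_const_seq mulr1 Hc.
    by rewrite mulr_sumr mulr_sumr mulr_sumr; congr (_ - _); apply: eq_bigr => t _; ring.
  rewrite Ecc.
  have H1 : 0 <= c * \sum_(t <- r) Num.max 0 (cc x y lam (a t) i).
    by apply: mulr_ge0 => //; apply: sumr_ge0 => t _; rewrite le_max lexx.
  have H2 : c * \sum_(t <- r) cc x y lam (a t) i <= c * \sum_(t <- r) Num.max 0 (cc x y lam (a t) i).
    by apply: ler_wpM2l => //; apply: ler_sum => t _; rewrite le_max lexx orbT.
  by rewrite ge_max H1 H2.
have T2 : dotv (W ab) (W ab) <= c * \sum_(t <- r) dotv (W (a t)) (W (a t)).
  by rewrite HW; apply: vec_jensen.
have Hni : 0 <= (n%:R : R)^-1 by rewrite invr_ge0 ltW.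
have H1 := ler_wpM2l Hni T1.
have H2 := ler_wpM2l (ltW hlam) T2.
set A := \sum_(t <- r) \sum_i Num.max 0 (cc x y lam (a t) i) in H1 *.
set B := \sum_(t <- r) dotv (W (a t)) (W (a t)) in H2 *.
have T3 : \sum_(i < n) \sum_(t <- r) a t i = \sum_(t <- r) \sum_(i < n) a t i by rewrite exchange_big.
rewrite T3.
set C := \sum_(t <- r) \sum_i a t i.
have -> : c * (n%:R^-1 * A + lam * B - n%:R^-1 * C) = n%:R^-1 * (c * A) + lam * (c * B) - n%:R^-1 * (c * C) by ring.
by apply: lerB => //; apply: lerD.
Qed.


End Jensen.

Lemma avg_in (R : realType) (n : nat) (I : Type) (r : seq I) (a : I -> 'I_n -> R) c :
  c * (size r)%:R = 1 -> 0 <= c -> (forall t, inI (a t)) ->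
  inI (fun i => c * \sum_(t <- r) a t i).
Proof.
move=> Hc Hc0 Ha i; apply/andP; split.
  by apply: mulr_ge0 => //; apply: sumr_ge0 => t _; have /andP[] := Ha t i.
rewrite -Hc (_ : (size r)%:R = \sum_(t <- r) (1 : R)); last by rewrite sum_const_seq mulr1.
apply: ler_wpM2l => //; apply: ler_sum => t _.
by have /andP[] := Ha t i.
Qed.

Section Final.
Variable R : realType.
Variables n d : nat.
Variable x : 'I_n -> 'rV[R]_d.
Variable y : 'I_n -> R.
Variables lam sigma : R.
Variables b T : nat.
Variable wstar : 'rV[R]_d.
Hypothesis hlam : 0 < lam.
Hypothesis hn : (1 < n)%N.
Hypothesis hb1 : (1 <= b)%N.
Hypothesis hbn : (b <= n)%N.
Hypothesis hy : forall i, y i ^+ 2 = 1.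
Hypothesis hx : forall i, dotv (x i) (x i) <= 1.
Hypothesis hsig : specnorm (Xmat x) ^+ 2 <= n%:R * sigma ^+ 2.
Local Notation bet := (beta n b sigma).
Hypothesis hbet : 0 < bet.
Hypothesis hopt : forall w, Pobj x y lam wstar <= Pobj x y lam w.
Local Notation E := (@Expect R n b T).
Local Notation D := (Dobj x y lam).
Local Notation P := (Pobj x y lam).
Local Notation al := (al x y lam sigma b (T:=T)).
Local Notation Ps := (P wstar).

Definition ee t := Ps - E (fun s => D (al s t)).
Definition gg t := E (fun s => gap x y lam (al s t)).

Lemma hn0' : (0 < n)%N. Proof. exact: ltn_trans hn. Qed.
Lemma nR : (0 : R) < n%:R. Proof. by rewrite ltr0n hn0'. Qed.
Lemma bR : (0 : R) < b%:R. Proof. by rewrite ltr0n. Qed.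
Lemma bnR : (b%:R : R) <= n%:R. Proof. by rewrite ler_nat. Qed.

Lemma ED_le t : E (fun s => D (al s t)) <= Ps.
Proof.
rewrite -(E_const T hbn Ps); apply: E_le => s.
exact: (weak_dual x y hlam hn0' wstar (al_in x y lam sigma b s t)).
Qed.

Lemma ee_ge0 t : 0 <= ee t.
Proof. by rewrite /ee subr_ge0 ED_le. Qed.

Lemma gg_ge t : ee t <= gg t.
Proof.
rewrite /ee /gg -(E_const T hbn Ps) -(E_sub b (fun _ => Ps)).
by apply: E_le => s; rewrite /gap lerD2r.
Qed.

Lemma ee_rec t s0 : (t < T)%N -> 0 <= s0 <= 1 ->
  ee t.+1 <= ee t - b%:R / n%:R * (s0 * gg t - bet * s0 ^+ 2 / (2 * lam * n%:R)).
Proof.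
move=> Ht Hs; have := rec hlam hn hb1 hbn hy hx hsig hbet Ht Hs.
rewrite /ee /gg; lra.
Qed.

Lemma ee0 : ee 0 <= 1.
Proof.
rewrite /ee.
have -> : E (fun s => D (al s 0)) = 0.
  rewrite -(E_const T hbn 0); rewrite /Expect; congr (_ * _); apply: eq_bigr => s _.
  rewrite /Dobj /=.
  rewrite big1 ?mulr0 ?add0r; last by move=> i _; rewrite big1 // => j _; rewrite !mul0r.
  by rewrite big1 ?mulr0.
have H0 : P 0 = 1.
  rewrite /Pobj.
  have -> : normv (0 : 'rV[R]_d) = 0.
    by rewrite /normv /dotv big1 ?sqrtr0 // => k _; rewrite mxE mul0r.
  rewrite expr0n /= mulr0 addr0.
  rewrite (eq_bigr (fun _ => 1)); last first.
    move=> i _; have -> : dotv (0 : 'rV[R]_d) (x i) = 0.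
      by rewrite /dotv big1 // => k _; rewrite mxE mul0r.
    by rewrite mulr0 subr0 /Num.max ltr01.
  by rewrite sumr_const card_ord -mulr_natr mulVf // gt_eqF // mul1r nR.
have := hopt 0; rewrite H0; lra.
Qed.

Local Notation p := (b%:R / n%:R : R).
Local Notation K2 := (bet / (2 * lam * n%:R)).

Lemma p_ge0 : 0 <= p. Proof. by apply: divr_ge0; rewrite ler0n. Qed.
Lemma p_le1 : p <= 1.
Proof. by rewrite ler_pdivrMr ?nR // mul1r bnR. Qed.
Lemma K2_gt0 : 0 < K2.
Proof. by apply: divr_gt0 => //; rewrite !mulr_gt0 // nR. Qed.

Lemma ph1 t : (t <= T)%N -> ee t <= (1 - p) ^+ t + K2.
Proof.
have Hp0 := p_ge0; have Hp1 := p_le1; have HK := K2_gt0.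
elim: t => [|t IH] Ht.
  rewrite expr0; have := ee0; lra.
have Hs : 0 <= (1 : R) <= 1 by apply/andP; split; lra.
have H := ee_rec Ht Hs; rewrite mul1r expr1n mulr1 in H.
have IH' := IH (ltnW Ht).
have A1 : p * ee t <= p * gg t by apply: ler_wpM2l => //; apply: gg_ge.
have Hq : 0 <= 1 - p by lra.
have A2 : (1 - p) * ee t <= (1 - p) * ((1 - p) ^+ t + K2) by apply: ler_wpM2l.
have E1 : (1 - p) * ee t = ee t - p * ee t by ring.
have E2 : (1 - p) * ((1 - p) ^+ t + K2) = (1 - p) * (1 - p) ^+ t + K2 - p * K2 by ring.
have E3 : p * (gg t - K2) = p * gg t - p * K2 by ring.
rewrite E1 E2 in A2; rewrite E3 in H.
rewrite exprS; lra.
Qed.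

Lemma qpow t0 : n%:R / b%:R * ln (2 * lam * n%:R / bet) <= t0%:R ->
  (1 - p) ^+ t0 <= K2.
Proof.
move=> Ht0; have Hp0 := p_ge0; have Hp1 := p_le1; have Hn := nR; have Hb := bR.
set z := 2 * lam * n%:R / bet.
have Hz : 0 < z by rewrite divr_gt0 // !mulr_gt0.
have Hl : ln z <= p * t0%:R.
  have E : ln z = p * (n%:R / b%:R * ln z).
    by rewrite mulrA (_ : p * (n%:R / b%:R) = 1) ?mul1r //; field; rewrite !gt_eqF.
  by rewrite E ler_wpM2l.
have H1 : 1 - p <= expR (- p) by have := expR_ge1Dx (- p); lra.
have H2 : (1 - p) ^+ t0 <= expR (- p) ^+ t0.
  apply: lerXn2r => //; rewrite ?inE ?nnegrE; [lra | exact: (ltW (expR_gt0 _))].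
apply: le_trans H2 _.
rewrite -expRM_natl.
have H3 : expR (t0%:R * - p) <= expR (- ln z) by rewrite ler_expR; lra.
apply: le_trans H3 _.
rewrite expRN lnK ?posrE //.
rewrite /z le_eqVlt; apply/orP; left; apply/eqP; field; rewrite !gt_eqF //.
Qed.

Lemma ph2 t0 T0 j : (T0 < T)%N -> (t0 + j <= T0)%N -> ee t0 <= bet / (lam * n%:R) ->
  ee (t0 + j) <= 2 * bet / (lam * (2 * n%:R + b%:R * j%:R)).
Proof.
move=> HT0 Hj Ht0; have Hp0 := p_ge0; have Hn := nR; have Hb := bR; have Hbn := bnR.
elim: j Hj => [|j IH] Hj.
  rewrite addn0 mulr0 addr0; suff -> : 2 * bet / (lam * (2 * n%:R)) = bet / (lam * n%:R) by [].
  by field; rewrite !gt_eqF.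
have Hj' : (t0 + j < T0)%N by rewrite -addnS.
have Ht : (t0 + j < T)%N by apply: ltn_trans HT0.
have IH' := IH (ltnW Hj').
set m := 2 * n%:R + b%:R * j%:R in IH'.
have Hm : 2 * n%:R <= m by rewrite /m lerDl; apply: mulr_ge0; rewrite ler0n.
have Hm0 : 0 < m by lra.
set sv := 2 * n%:R / m.
have Hs : 0 <= sv <= 1.
  apply/andP; split; first by apply: divr_ge0; lra.
  by rewrite /sv ler_pdivrMr // mul1r.
have H := ee_rec Ht Hs.
rewrite addnS.
have Hps : 0 <= p * sv by apply: mulr_ge0 => //; case/andP: Hs.
have Hps1 : p * sv <= 1.
  have -> : p * sv = 2 * b%:R / m by rewrite /sv; field; rewrite !gt_eqF.
  rewrite ler_pdivrMr // mul1r /m.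
  have : 0 <= b%:R * j%:R :> R by apply: mulr_ge0; rewrite ler0n.
  lra.
have A1 : p * sv * ee (t0 + j) <= p * sv * gg (t0 + j) by apply: ler_wpM2l => //; apply: gg_ge.
have A2 : (1 - p * sv) * ee (t0 + j) <= (1 - p * sv) * (2 * bet / (lam * m)).
  by apply: ler_wpM2l => //; lra.
set B := 2 * bet / (lam * m) in A2.
have E1 : (1 - p * sv) * ee (t0 + j) = ee (t0 + j) - p * sv * ee (t0 + j) by ring.
have E3 : p * (sv * gg (t0 + j) - bet * sv ^+ 2 / (2 * lam * n%:R))
   = p * sv * gg (t0 + j) - p * bet * sv ^+ 2 / (2 * lam * n%:R) by ring.
rewrite E1 in A2; rewrite E3 in H.
have Ej : 2 * n%:R + b%:R * j.+1%:R = m + b%:R by rewrite /m -addn1 natrD; ring.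
rewrite Ej.
have Ekey : (1 - p * sv) * B + p * bet * sv ^+ 2 / (2 * lam * n%:R)
   = 2 * bet / (lam * (m + b%:R)) - 2 * bet * b%:R ^+ 2 / (lam * m ^+ 2 * (m + b%:R)).
  rewrite /B /sv; field; rewrite !gt_eqF //; lra.
have Hpos : 0 <= 2 * bet * b%:R ^+ 2 / (lam * m ^+ 2 * (m + b%:R)).
  apply: divr_ge0; first by apply: mulr_ge0; [apply: mulr_ge0; [by []|exact: ltW hbet]|apply: sqr_ge0].
  apply: mulr_ge0; [apply: mulr_ge0; [exact: ltW hlam|apply: sqr_ge0]|lra].
lra.
Qed.


Lemma ph3 T0 j sv : 0 <= sv <= 1 -> (T0 + j <= T)%N ->
  \sum_(t <- iota T0 j) p * sv * gg t
  <= ee T0 - ee (T0 + j) + j%:R * (p * bet * sv ^+ 2 / (2 * lam * n%:R)).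
Proof.
move=> Hs; elim: j => [|j IH] Hj.
  by rewrite big_nil addn0 subrr mul0r addr0.
have Ht : (T0 + j < T)%N by rewrite -addnS.
have IH' := IH (ltnW Ht).
rewrite -addn1 iotaD big_cat /= big_seq1.
have H := ee_rec Ht Hs.
have E3 : p * (sv * gg (T0 + j) - bet * sv ^+ 2 / (2 * lam * n%:R))
   = p * sv * gg (T0 + j) - p * bet * sv ^+ 2 / (2 * lam * n%:R) by ring.
rewrite E3 in H.
rewrite natrD mulrDl mul1r addnA addn1.
lra.
Qed.

Lemma final_bound t0 T0 eps : 0 < eps ->
  Num.max 0 (Num.ceil (n%:R / b%:R * ln (2 * lam * n%:R / bet)))%:~R <= (t0%:R : R) ->
  t0%:R + bet / b%:R * Num.max 0 (4 / (lam * eps) - 2 * n%:R / bet) <= (T0%:R : R) ->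
  T0%:R + Num.max (Num.ceil (n%:R / b%:R : R))%:~R (bet / b%:R * (lam * eps)^-1) <= (T%:R : R) ->
  E (fun s => P (wof x y lam (@alpha_bar R n d x y lam bet T0 T s))) - Ps
    <= E (fun s => P (wof x y lam (@alpha_bar R n d x y lam bet T0 T s)) - D (@alpha_bar R n d x y lam bet T0 T s))
  /\ E (fun s => P (wof x y lam (@alpha_bar R n d x y lam bet T0 T s)) - D (@alpha_bar R n d x y lam bet T0 T s)) <= eps.
Proof.
move=> Heps Ht0 HT0 HT.
have Hn := nR; have Hb := bR; have Hbn := bnR; have Hp0 := p_ge0.
have Hle_max : forall u v : R, u <= Num.max u v /\ v <= Num.max u v.
  by move=> u v; rewrite !le_max !lexx ?orbT.
have HM0 : 0 <= bet / b%:R * Num.max 0 (4 / (lam * eps) - 2 * n%:R / bet).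
  apply: mulr_ge0; first by apply: divr_ge0; [exact: ltW hbet|exact: ltW Hb].
  exact: (Hle_max 0 _).1.
have Ht0T0 : (t0 <= T0)%N by rewrite -(ler_nat R); lra.
have Hnb : 0 < n%:R / b%:R :> R by apply: divr_gt0.
have Hceil : n%:R / b%:R <= (Num.ceil (n%:R / b%:R : R))%:~R :> R by apply: ceil_ge.
have HNa : n%:R / b%:R <= T%:R - T0%:R :> R.
  have := (Hle_max ((Num.ceil (n%:R / b%:R : R))%:~R) (bet / b%:R * (lam * eps)^-1)).1; lra.
have HNb : bet / b%:R * (lam * eps)^-1 <= T%:R - T0%:R :> R.
  have := (Hle_max ((Num.ceil (n%:R / b%:R : R))%:~R) (bet / b%:R * (lam * eps)^-1)).2; lra.
have HT0T : (T0 < T)%N by rewrite -(ltr_nat R); lra.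
set NR := T%:R - T0%:R : R.
have HNR : 0 < NR by rewrite /NR; lra.
have HNRe : NR = (T - T0)%:R by rewrite natrB // ltnW.
set c := NR^-1.
set r := index_iota T0 T.
have Hsz : c * (size r)%:R = 1 by rewrite size_iota -HNRe mulVf // gt_eqF.
have Hc0 : 0 <= c by rewrite invr_ge0 ltW.
have Hab : forall s, @alpha_bar R n d x y lam bet T0 T s = (fun i => c * \sum_(t <- r) al s t i) by [].
have Hin : forall s, inI (@alpha_bar R n d x y lam bet T0 T s).
  by move=> s; rewrite Hab; apply: avg_in => // t; apply: al_in.
split.
  rewrite (E_sub b (fun s => P (wof x y lam (@alpha_bar R n d x y lam bet T0 T s)))).
  rewrite lerD2l lerN2 -(E_const T hbn Ps); apply: E_le => s.
  exact: (weak_dual x y hlam hn0' wstar (Hin s)).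
change (E (fun s => gap x y lam (@alpha_bar R n d x y lam bet T0 T s)) <= eps).
have J : E (fun s => gap x y lam (@alpha_bar R n d x y lam bet T0 T s)) <= c * \sum_(t <- r) gg t.
  rewrite /gg -E_sum -(E_scale b c).
  apply: E_le => s; rewrite Hab; exact: (gap_jensen x y hlam hn0' (fun t => al s t) Hsz Hc0).
apply: le_trans J _.
set sv := n%:R / (b%:R * NR).
have Hsv : 0 <= sv <= 1.
  apply/andP; split; first by apply: divr_ge0; [lra|apply: mulr_ge0; lra].
  rewrite ler_pdivrMr ?mulr_gt0 // mul1r.
  by move: HNa; rewrite ler_pdivrMr // (mulrC b%:R).
have HTT : (T0 + (T - T0) <= T)%N by rewrite subnKC // ltnW.
have H3 := ph3 Hsv HTT.
rewrite subnKC ?(ltnW HT0T) // -HNRe in H3.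
have Epsv : p * sv = c by rewrite /sv /c; field; rewrite !gt_eqF.
have -> : c * \sum_(t <- r) gg t = \sum_(t <- iota T0 (T - T0)) p * sv * gg t.
  by rewrite Epsv mulr_sumr.
have Ecst : NR * (p * bet * sv ^+ 2 / (2 * lam * n%:R)) = bet / (2 * lam * b%:R * NR).
  by rewrite /sv; field; rewrite !gt_eqF.
rewrite Ecst in H3.
have HeT := ee_ge0 T.
have Ht0r : n%:R / b%:R * ln (2 * lam * n%:R / bet) <= t0%:R.
  apply: le_trans Ht0; apply: le_trans (ceil_ge _) _; exact: (Hle_max 0 _).2.
have Ht0T : (t0 <= T)%N by apply: leq_trans Ht0T0 (ltnW HT0T).
have Hee0 : ee t0 <= bet / (lam * n%:R).
  have := ph1 Ht0T; have := qpow Ht0r.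
  have -> : bet / (lam * n%:R) = K2 + K2 by field; rewrite !gt_eqF.
  lra.
have HT0' : (t0 + (T0 - t0) <= T0)%N by rewrite subnKC.
have H2 := ph2 HT0T HT0' Hee0.
rewrite subnKC // natrB // in H2.
set m := 2 * n%:R + b%:R * (T0%:R - t0%:R) in H2.
have HmM : 4 * bet / (lam * eps) <= m.
  have HM1 : 4 / (lam * eps) - 2 * n%:R / bet <= Num.max 0 (4 / (lam * eps) - 2 * n%:R / bet).
    exact: (Hle_max 0 _).2.
  have HM2 : bet * (4 / (lam * eps) - 2 * n%:R / bet) <= bet * Num.max 0 (4 / (lam * eps) - 2 * n%:R / bet).
    by rewrite ler_pM2l.
  have HM3 : bet * Num.max 0 (4 / (lam * eps) - 2 * n%:R / bet) <= b%:R * (T0%:R - t0%:R).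
    have : bet / b%:R * Num.max 0 (4 / (lam * eps) - 2 * n%:R / bet) <= T0%:R - t0%:R by lra.
    move=> H; have := ler_wpM2l (ltW Hb) H.
    have -> : b%:R * (bet / b%:R * Num.max 0 (4 / (lam * eps) - 2 * n%:R / bet)) = bet * Num.max 0 (4 / (lam * eps) - 2 * n%:R / bet).
      by field; rewrite gt_eqF.
    by [].
  have E4 : bet * (4 / (lam * eps) - 2 * n%:R / bet) = 4 * bet / (lam * eps) - 2 * n%:R.
    by field; rewrite !gt_eqF.
  rewrite /m; lra.
have Hle : 0 < 4 * bet / (lam * eps) by apply: divr_gt0; [apply: mulr_gt0 => //|apply: mulr_gt0].
have Hm0 : 0 < m by lra.
have B1 : 2 * bet / (lam * m) <= eps / 2.
  rewrite ler_pdivrMr ?mulr_gt0 //.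
  have : lam * eps * (4 * bet / (lam * eps)) <= lam * eps * m by rewrite ler_pM2l ?mulr_gt0.
  have -> : lam * eps * (4 * bet / (lam * eps)) = 4 * bet by field; rewrite !gt_eqF.
  move=> H; have -> : eps / 2 * (lam * m) = (lam * eps * m) / 2 by ring.
  lra.
have B2 : bet / (2 * lam * b%:R * NR) <= eps / 2.
  rewrite ler_pdivrMr ?mulr_gt0 //.
  have : b%:R * (lam * eps) * (bet / b%:R * (lam * eps)^-1) <= b%:R * (lam * eps) * NR.
    by rewrite ler_pM2l ?mulr_gt0.
  have -> : b%:R * (lam * eps) * (bet / b%:R * (lam * eps)^-1) = bet by field; rewrite !gt_eqF.
  move=> H; have -> : eps / 2 * (2 * lam * b%:R * NR) = b%:R * (lam * eps) * NR by field.
  exact: H.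
lra.
Qed.


End Final.

Unset Implicit Arguments.

Theorem theorem2 (R : realType) (n d : nat) (x : 'I_n -> 'rV[R]_d)
  (y : 'I_n -> R) (sigma lam : R) (b : nat) (eps : R) (t0 T0 T : nat)
  (wstar : 'rV[R]_d) :
  (2 <= n)%N ->
  (forall i, y i = 1 \/ y i = -1) ->
  (forall i, normv (x i) <= 1) ->
  specnorm (Xmat x) ^+ 2 / n%:R <= sigma ^+ 2 ->
  0 < lam ->
  (1 <= b <= n)%N ->
  0 < beta n b sigma ->
  (forall w, Pobj x y lam wstar <= Pobj x y lam w) ->
  0 < eps ->
  Num.max 0 (Num.ceil (n%:R / b%:R * ln (2 * lam * n%:R / beta n b sigma)))%:~R
    <= (t0%:R : R) ->
  t0%:R + beta n b sigma / b%:R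
          * Num.max 0 (4 / (lam * eps) - 2 * n%:R / beta n b sigma)
    <= (T0%:R : R) ->
  T0%:R + Num.max (Num.ceil (n%:R / b%:R : R))%:~R
                  (beta n b sigma / b%:R * (lam * eps)^-1)
    <= (T%:R : R) ->
  let bet := beta n b sigma in
  let abar := @alpha_bar R n d x y lam bet T0 T in
  @Expect R n b T (fun s => Pobj x y lam (wof x y lam (abar s))) - Pobj x y lam wstar
    <= @Expect R n b T (fun s => Pobj x y lam (wof x y lam (abar s))
                              - Dobj x y lam (abar s))
  /\ @Expect R n b T (fun s => Pobj x y lam (wof x y lam (abar s))
                            - Dobj x y lam (abar s)) <= eps.
Proof.
move=> Hn2 Hy Hx Hsig Hlam Hb Hbet Hopt Heps Ht0 HT0 HT bet abar.
have hy : forall i, y i ^+ 2 = 1.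
  by move=> i; case: (Hy i) => ->; rewrite ?sqrrN expr1n.
have hx : forall i, dotv (x i) (x i) <= 1.
  move=> i; rewrite -normv_sqr; have := Hx i; have := sqrtr_ge0 (dotv (x i) (x i)).
  rewrite /normv => H0 H1; nra.
have Hn0 : (0 : R) < n%:R by rewrite ltr0n; apply: ltn_trans Hn2.
have hsig : specnorm (Xmat x) ^+ 2 <= n%:R * sigma ^+ 2.
  by move: Hsig; rewrite ler_pdivrMr // mulrC.
case/andP: Hb => hb1 hbn.
exact: (final_bound Hlam Hn2 hb1 hbn hy hx hsig Hbet Hopt Heps Ht0 HT0 HT).
Qed.
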